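(* For $n\ge 4$, the dom-stability of the path $P_n$ is $St_{dom}(P_n)=2$ if $n\equiv 3\pmod 4$, and $St_{dom}(P_n)=1$ otherwise.
   Context: A dominated coloring of a graph is a proper coloring in which every color class is dominated by at least one vertex, i.e. for each color class $C$ there is a vertex adjacent to every vertex of $C$; $\chi_{dom}(G)$ is the minimum number of colors in a dominated coloring. The dom-stability $St_{dom}(G)$ is the minimum number of vertices of $G$ whose removal changes the dominated chromatic number of $G$. *)

(* Defs.v *)
From mathcomp Require Import all_boot.
Set Implicit Arguments. Unset Strict Implicit. Unset Printing Implicit Defensive.

(* A (simple) graph is an adjacency relation e : rel T on a finType T.
   All notions below are taken for the induced subgraph G[S], S : {set T}. *)

(* Convention: a class consisting of a single
   isolated vertex of G[S] is also considered dominated. *)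
Definition dom_coloring (T : finType) (e : rel T) (S : {set T}) (k : nat)
    (c : T -> nat) : bool :=
  [&& [forall x in S, c x < k],
      [forall x in S, forall y in S, e x y ==> (c x != c y)] &
      [forall x in S,
         [exists v in S, forall y in S, (c y == c x) ==> e v y]
         || ([forall y in S, (c y == c x) ==> (y == x)]
             && [forall y in S, ~~ e x y])]].

(* G[S] admits a dominated coloring with (at most) k colors.
   Colors are taken in 'I_(#|T|.+1), which loses nothing since k <= #|T|
   colors always suffice for the minimum considered below. *)
Definition has_dom_coloring (T : finType) (e : rel T) (S : {set T}) (k : nat)
  : bool :=
  [exists c : {ffun T -> 'I_(#|T|.+1)}, dom_coloring e S k (fun x => c x)].

(* dominated chromatic number of G[S]: least k <= #|T| admitting a dominated
   coloring with k colors (every vertex its own color always works). *)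
Definition chi_dom (T : finType) (e : rel T) (S : {set T}) : nat :=
  \big[minn/#|T|]_(k < #|T|.+1 | has_dom_coloring e S k) (k : nat).

Definition St_dom (T : finType) (e : rel T) : nat :=
  \big[minn/#|T|]_(X : {set T} | chi_dom e (~: X) != chi_dom e [set: T]) #|X|.

Definition path_rel (n : nat) : rel 'I_n :=
  fun i j => (i.+1 == j :> nat) || (j.+1 == i :> nat).
Arguments path_rel n : clear implicits.

(* Main.v *)
Require Import Defs.
From mathcomp Require Import all_boot zify.
Set Implicit Arguments. Unset Strict Implicit. Unset Printing Implicit Defensive.

Definition fcnt m := 2 * (m %/ 4) + minn (m %% 4) 2.
Definition gcol p := 2 * (p %/ 4) + p %% 2.
Definition pos j := 4 * (j %/ 2) + j %% 2.
Definition inSb (n a v z : nat) := (a <= z) && (z != v) && (z < n).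
Definition col (n a v x : nat) :=
  if x < v then gcol (x - a) else fcnt (minn v n - a) + gcol (x - v.+1).
Definition Kav n a v := fcnt (minn v n - a) + fcnt (n - v.+1).
Definition hfun n a v j :=
  if j < fcnt (minn v n - a) then a + pos j
  else v.+1 + pos (j - fcnt (minn v n - a)).
Definition adj (x y : nat) := (x.+1 == y) || (y.+1 == x).

Ltac splitif := match goal with
 | |- context[if ?x < ?y then _ else _] => let H := fresh "H" in case: (ltnP x y) => H
 | H0 : context[if ?x < ?y then _ else _] |- _ =>
    let H := fresh "H" in let H1 := fresh "H" in revert H0; case: (ltnP x y) => H H1
 end.
Ltac crush := unfold inSb, col, Kav, hfun, adj, gcol, fcnt, pos in *;
  repeat splitif; lia.

Lemma colK n a v x : a <= v -> inSb n a v x -> col n a v x < Kav n a v.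
Proof. repeat (let H := fresh "H" in intro H); crush. Qed.
Lemma colle n a v x : a <= v -> x < n -> col n a v x <= n.
Proof. repeat (let H := fresh "H" in intro H); crush. Qed.
Lemma Kle n a v : a <= v -> Kav n a v <= n.
Proof. repeat (let H := fresh "H" in intro H); crush. Qed.
Lemma colproper n a v x y : a <= v -> inSb n a v x -> inSb n a v y -> adj x y ->
  col n a v x != col n a v y.
Proof. repeat (let H := fresh "H" in intro H); apply/eqP; crush. Qed.
Lemma hin n a v j : a <= v -> j < Kav n a v -> inSb n a v (hfun n a v j).
Proof. repeat (let H := fresh "H" in intro H); crush. Qed.
Lemma hsep n a v i j w : a <= v -> i < Kav n a v -> j < Kav n a v -> i != j ->
  inSb n a v w -> ~~ (adj w (hfun n a v i) && adj w (hfun n a v j)).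
Proof. repeat (let H := fresh "H" in intro H); apply/negP => /andP[Hx Hy]. crush. Qed.

Lemma hinj n a v i j : a <= v -> i < Kav n a v -> j < Kav n a v -> i != j ->
  hfun n a v i != hfun n a v j.
Proof. repeat (let H := fresh "H" in intro H); apply/eqP => He. crush. Qed.

Lemma domnat n a v x : a <= v -> inSb n a v x ->
  (exists w, inSb n a v w /\ forall y, inSb n a v y -> col n a v y = col n a v x -> adj w y)
  \/ ((forall y, inSb n a v y -> col n a v y = col n a v x -> y = x) /\
      forall y, inSb n a v y -> ~~ adj x y).
Proof.
move=> av hx.
case: (boolP (2 <= (if x < v then x - a else x - v.+1) %% 4)) => hp.
  left; exists x.-1; split; [crush | move=> y hy hc; crush].
case: (boolP (inSb n a v x.+1)) => h1.
  left; exists x.+1; split; [crush | move=> y hy hc; crush].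
case: (boolP ((0 < x) && inSb n a v x.-1)) => h2.
  left; exists x.-1; split; [crush | move=> y hy hc; crush].
right; split => y hy; [move=> hc|]; crush.
Qed.

From Stdlib Require Import FunctionalExtensionality.

Definition Sav n a v := [set x : 'I_n | inSb n a v x].

Lemma dom_Sav n a v : a <= v ->
  dom_coloring (path_rel n) (Sav n a v) (Kav n a v) (fun x => col n a v x).
Proof.
move=> av; apply/and3P; split.
- apply/forall_inP => x; rewrite inE => hx; exact: colK.
- apply/forall_inP => x; rewrite inE => hx; apply/forall_inP => y; rewrite inE => hy.
  apply/implyP => exy; exact: colproper.
- apply/forall_inP => x; rewrite inE => hx.
  case: (domnat av hx) => [[w [hw H]] | [H1 H2]].
  + apply/orP; left; apply/exists_inP.
    have wn : w < n by move: hw; rewrite /inSb => /andP[].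
    exists (Ordinal wn); first by rewrite inE.
    apply/forall_inP => y; rewrite inE => hy; apply/implyP => /eqP e; exact: H.
  + apply/orP; right; apply/andP; split; apply/forall_inP => y; rewrite inE => hy.
    * apply/implyP => /eqP e; apply/eqP/val_inj; exact: H1.
    * exact: H2.
Qed.

Lemma classlem n S k c (x y : 'I_n) : dom_coloring (path_rel n) S k c ->
  x \in S -> y \in S -> c x = c y -> x != y ->
  exists2 w, w \in S & path_rel n w x && path_rel n w y.
Proof.
case/and3P => _ _ /forall_inP D hx hy cxy nxy.
case/orP: (D x hx).
- case/exists_inP => w hw /forall_inP H; exists w => //.
  apply/andP; split; [apply: (implyP (H x hx)) | apply: (implyP (H y hy))];
  by rewrite ?eqxx // cxy.
- case/andP => /forall_inP H _.
  have := implyP (H y hy); rewrite cxy eqxx => /(_ isT) /eqP yx.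
  by rewrite yx eqxx in nxy.
Qed.

Lemma lowerb n a v k c : a <= v -> dom_coloring (path_rel n) (Sav n a v) k c ->
  Kav n a v <= k.
Proof.
move=> av D.
have hlt : forall j : 'I_(Kav n a v), hfun n a v j < n.
  by move=> j; have := hin av (ltn_ord j); rewrite /inSb => /andP[].
pose h (j : 'I_(Kav n a v)) : 'I_n := Ordinal (hlt j).
have hS : forall j, h j \in Sav n a v by move=> j; rewrite inE; exact: hin.
have Hlt : forall j, c (h j) < k.
  by move=> j; case/and3P: D => /forall_inP H _ _; exact: H.
pose f j : 'I_k := Ordinal (Hlt j).
have inj : injective f.
  move=> i j /(congr1 val) /= e; apply/eqP; apply/negPn/negP => nij.
  have nh : h i != h j.
    apply/negP => /eqP /(congr1 val) /= e2.
    by move: e2; apply/eqP; apply: hinj => //; apply: ltn_ord.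
  have [w hw /andP[a1 a2]] := classlem D (hS i) (hS j) e nh.
  have := hsep av (ltn_ord i) (ltn_ord j) nij (_ : inSb n a v w).
  rewrite /adj; move: a1 a2; rewrite /path_rel /= => -> ->.
  by move=> /(_ _)/negP; apply; rewrite inE in hw.
by have := leq_card f inj; rewrite !card_ord.
Qed.

Lemma bigmin_le (I : eqType) (r : seq I) (P : pred I) (F : I -> nat) d i0 :
  i0 \in r -> P i0 -> \big[minn/d]_(i <- r | P i) F i <= F i0.
Proof.
elim: r => // x r IH; rewrite inE big_cons => /orP[/eqP <- | H] Pi.
  by rewrite Pi geq_minl.
case: (P x); last exact: IH.
by rewrite geq_min IH ?orbT.
Qed.
Lemma chi_le (T : finType) (e : rel T) S m : m <= #|T| -> has_dom_coloring e S m ->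
  chi_dom e S <= m.
Proof.
move=> hm H; rewrite /chi_dom.
pose i0 : 'I_(#|T|.+1) := Ordinal (hm : m < #|T|.+1).
apply: (@bigmin_le _ _ _ _ _ i0); [exact: mem_index_enum | exact: H].
Qed.
Lemma chi_ge (T : finType) (e : rel T) S m : m <= #|T| ->
  (forall k, has_dom_coloring e S k -> m <= k) -> m <= chi_dom e S.
Proof.
move=> hm H; rewrite /chi_dom; apply: (big_ind (fun x => m <= x)) => //.
  by move=> x y; rewrite leq_min => -> ->.
by move=> i Hi; exact: H.
Qed.

Lemma chi_Sav n a v : a <= v -> chi_dom (path_rel n) (Sav n a v) = Kav n a v.
Proof.
move=> av; apply/eqP; rewrite eqn_leq; apply/andP; split.
  apply: chi_le; first by rewrite card_ord; exact: Kle.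
  pose cf := [ffun x : 'I_n => (inord (col n a v x) : 'I_(#|'I_n|).+1)].
  apply/existsP; exists cf.
  have E : (fun x => nat_of_ord (cf x)) = (fun x => col n a v x).
    apply: functional_extensionality => x; rewrite ffunE inordK //.
    by rewrite card_ord ltnS; apply: colle.
  rewrite E.
  exact: dom_Sav.
apply: chi_ge; first by rewrite card_ord; exact: Kle.
by move=> k /existsP[c D]; exact: lowerb D.
Qed.

Lemma St_le (T : finType) (e : rel T) (X : {set T}) :
  chi_dom e (~: X) != chi_dom e [set: T] -> St_dom e <= #|X|.
Proof.
move=> H; rewrite /St_dom.
apply: (@bigmin_le _ _ _ _ _ X); [exact: mem_index_enum | exact: H].
Qed.

Lemma St_ge (T : finType) (e : rel T) m : m <= #|T| ->
  (forall X : {set T}, #|X| < m -> chi_dom e (~: X) = chi_dom e [set: T]) ->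
  m <= St_dom e.
Proof.
move=> hm H; rewrite /St_dom; apply: (big_ind (fun x => m <= x)) => //.
  by move=> x y; rewrite leq_min => -> ->.
move=> X /eqP HX; rewrite leqNgt; apply/negP => hX; exact: HX (H X hX).
Qed.

Lemma setT_Sav n : [set: 'I_n] = Sav n 0 n.
Proof. apply/setP => x; rewrite !inE /inSb; have := ltn_ord x; lia. Qed.

Lemma C1_Sav n (i : 'I_n) : ~: [set i] = Sav n 0 i.
Proof. apply/setP => x; rewrite !inE /inSb -val_eqE /=; have := ltn_ord x; lia. Qed.

Lemma C0_Sav n (i : 'I_n) : val i = 0 -> ~: [set i] = Sav n 1 n.
Proof. move=> hi; apply/setP => x; rewrite !inE /inSb -val_eqE /= hi; have := ltn_ord x; lia. Qed.

Lemma C01_Sav n (i j : 'I_n) : val i = 0 -> val j = 1 -> ~: [set i; j] = Sav n 2 n.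
Proof. move=> hi hj; apply/setP => x; rewrite !inE /inSb -!val_eqE /= hi hj; have := ltn_ord x; lia. Qed.

Theorem mainTheorem8 (n : nat) (hn : 4 <= n) :
  St_dom (path_rel n) = (if n %% 4 == 3 then 2 else 1).
Proof.
have h0 : 0 < n by lia.
have h1 : 1 < n by lia.
have h2 : 2 < n by lia.
pose o0 : 'I_n := Ordinal h0.
pose o1 : 'I_n := Ordinal h1.
pose o2 : 'I_n := Ordinal h2.
have ge1 : 1 <= St_dom (path_rel n).
  apply: St_ge; first by rewrite card_ord; lia.
  move=> X; rewrite ltnS leqn0 cards_eq0 => /eqP ->; by rewrite setC0.
have chiT : chi_dom (path_rel n) [set: 'I_n] = Kav n 0 n by rewrite setT_Sav chi_Sav.
case: ifP => h3.
- apply/eqP; rewrite eqn_leq; apply/andP; split.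
  + have := St_le (e := path_rel n) (X := [set o0; o1]); rewrite cards2.
    apply; rewrite chiT (C01_Sav (i := o0) (j := o1)) // chi_Sav //.
    apply/eqP; crush.
  + apply: St_ge; first by rewrite card_ord; lia.
    move=> X; rewrite ltnS leq_eqVlt ltnS leqn0 cards_eq0 => /orP[/cards1P[i ->] | /eqP ->].
      by rewrite chiT C1_Sav chi_Sav //; have := ltn_ord i; crush.
    by rewrite setC0.
- apply/eqP; rewrite eqn_leq ge1 andbT.
  case: (boolP (n %% 4 == 0)) => h4.
  + have := St_le (e := path_rel n) (X := [set o2]); rewrite cards1.
    apply; rewrite chiT C1_Sav chi_Sav //; rewrite /o2 /=; apply/eqP; crush.
  + have := St_le (e := path_rel n) (X := [set o0]); rewrite cards1.
    apply; rewrite chiT (C0_Sav (i := o0)) // chi_Sav //; apply/eqP; crush.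
Qed.
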